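(* Let $a>1$ be fixed. For each $w$ on the unit circle, let $D_w$ be the line $$ (a-w)z+w^3(wa-1)\overline{z}+2w^2a^2-3w(w^2+1)a+4w^2=0 $$ (the directrix of the parabola with focus $a$ tangent to the unit circle at $w$). As $w$ ranges over the unit circle, the envelope of the family of lines $\{D_w\}$ is given by the equation $$ z^2\overline{z}^2-2(a^2+2)z\overline{z}+4a(z+\overline{z})+a^4-4a^2=0. $$
   Context: The variable $z$ ranges over $\mathbb{C}\cong\mathbb{R}^2$ and $\overline{z}$ denotes its complex conjugate. The envelope of a one-parameter family of curves is the curve tangent to each member of the family. *)

(* Defs.v *)
From Stdlib Require Import Reals.
From Coquelicot Require Import Coquelicot.
Open Scope R_scope.

Definition ucirc (t : R) : C := (cos t, sin t).

Definition directrix_lhs (a : R) (w z : C) : C :=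
  ((RtoC a - w) * z + (w * w * w) * (w * RtoC a - 1) * Cconj z
   + 2 * (w * w) * RtoC (a ^ 2) - 3 * w * (w * w + 1) * RtoC a
   + 4 * (w * w))%C.

(* Envelope of a smooth one-parameter family of curves {z | G t z = 0}
   (t real parameter, G complex-valued, i.e. a pair of real equations):
   the set of points z such that for some parameter t, G t z = 0 and
   d/dt G t z = 0 (both real and imaginary parts). *)
Definition envelope (G : R -> C -> C) (z : C) : Prop :=
  exists t : R,
    G t z = 0%C /\
    is_derive (fun s => Re (G s z)) t 0 /\
    is_derive (fun s => Im (G s z)) t 0.

Definition envelope_lhs (a : R) (z : C) : C :=
  (z * z * Cconj z * Cconj z - 2 * RtoC (a ^ 2 + 2) * z * Cconj z
   + 4 * RtoC a * (z + Cconj z) + RtoC (a ^ 4 - 4 * a ^ 2))%C.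

(* Main.v *)
Require Import Defs.
From Stdlib Require Import Reals Lra Psatz.
From Coquelicot Require Import Coquelicot.
Open Scope R_scope.

Ltac csimpl := unfold Cconj; simpl; unfold Cmult, Cplus, Cminus, Copp, RtoC; simpl.

Lemma modrel (L K c s : R) : s^2 + c^2 = 1 -> L = (c^2+s^2-1)*K -> L = 0.
Proof. intros H E. rewrite E. replace (c^2+s^2-1) with 0 by lra. ring. Qed.

Lemma sc t : sin t ^ 2 + cos t ^ 2 = 1.
Proof. rewrite <- (sin2_cos2 t). unfold Rsqr. ring. Qed.

Definition Ftp a x y c s := 2*(a*(x*(c*c-s*s)+y*(2*s*c))-(x*c+y*s)+a*a+2-3*a*c).
Definition Fdp a x y c s := 2*(a*(-2*x*(2*s*c)+2*y*(c*c-s*s))+x*s-y*c+3*a*s).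

Definition Ft a x y t := 2*(a*(x*cos(2*t)+y*sin(2*t))-(x*cos t+y*sin t)+a*a+2-3*a*cos t).
Definition Fd a x y t := 2*(a*(-2*x*sin(2*t)+2*y*cos(2*t))+x*sin t-y*cos t+3*a*sin t).

Lemma Ft_p a x y t : Ft a x y t = Ftp a x y (cos t) (sin t).
Proof. unfold Ft, Ftp. rewrite cos_2a, sin_2a. ring. Qed.
Lemma Fd_p a x y t : Fd a x y t = Fdp a x y (cos t) (sin t).
Proof. unfold Fd, Fdp. rewrite cos_2a, sin_2a. ring. Qed.

Lemma decomp_re a x y c s : s^2 + c^2 = 1 ->
  Re (directrix_lhs a (c,s) (x,y)) = (c*c-s*s) * Ftp a x y c s.
Proof.
  intros H. apply Rminus_diag_uniq. apply (modrel _
   ((-1)*y*s + (1)*x*c + (3)*a*c + (-1)*a*x + (-1)*a*x*s^2 + (-1)*a*x*c^2) c s H).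
  unfold directrix_lhs, Ftp. csimpl. ring.
Qed.

Lemma decomp_im a x y c s : s^2 + c^2 = 1 ->
  Im (directrix_lhs a (c,s) (x,y)) = (2*s*c) * Ftp a x y c s.
Proof.
  intros H. apply Rminus_diag_uniq. apply (modrel _
   ((1)*y*c + (1)*x*s + (3)*a*s + (-1)*a*y + (-1)*a*y*s^2 + (-1)*a*y*c^2) c s H).
  unfold directrix_lhs, Ftp. csimpl. ring.
Qed.

Lemma re_fun a x y t : Re (directrix_lhs a (ucirc t) (x,y)) = cos (2*t) * Ft a x y t.
Proof.
  unfold ucirc. rewrite decomp_re by apply sc. rewrite Ft_p, cos_2a. ring.
Qed.
Lemma im_fun a x y t : Im (directrix_lhs a (ucirc t) (x,y)) = sin (2*t) * Ft a x y t.
Proof.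
  unfold ucirc. rewrite decomp_im by apply sc. rewrite Ft_p, sin_2a. ring.
Qed.

Lemma der_re a x y t : is_derive (fun s => Re (directrix_lhs a (ucirc s) (x,y))) t
  (-2*sin(2*t)*Ft a x y t + cos(2*t)*Fd a x y t).
Proof.
  apply (is_derive_ext (fun s => cos (2*s) * Ft a x y s)).
  { intros; now rewrite re_fun. }
  unfold Ft, Fd. auto_derive; [easy|]. ring.
Qed.
Lemma der_im a x y t : is_derive (fun s => Im (directrix_lhs a (ucirc s) (x,y))) t
  (2*cos(2*t)*Ft a x y t + sin(2*t)*Fd a x y t).
Proof.
  apply (is_derive_ext (fun s => sin (2*s) * Ft a x y s)).
  { intros; now rewrite im_fun. }
  unfold Ft, Fd. auto_derive; [easy|]. ring.
Qed.

Lemma solve_fwd a x y c s : 1 < a -> s^2 + c^2 = 1 ->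
  Ftp a x y c s = 0 -> Fdp a x y c s = 0 ->
  x = 2*c - a*(c*c-s*s) /\ y = 2*s - 2*a*c*s.
Proof.
  intros Ha H H1 H2.
  assert (Hc : c <= 1) by nra.
  assert (Hd : 0 < 2*a*a - 3*a*c + 1) by nra.
  pose (A := a*(c*c-s*s) - c). pose (B := a*(2*s*c) - s).
  pose (D := -2*a*(2*s*c) + s). pose (E := 2*a*(c*c-s*s) - c).
  assert (I1 : E * Ftp a x y c s - B * Fdp a x y c s - 2*(2*a*a - 3*a*c + 1)*(x - (2*c - a*(c*c-s*s))) = 0).
  { apply (modrel _ ((2)*x + (-6)*a*x*c + (-6)*a^2*c + (4)*a^2*x + (4)*a^2*x*s^2 + (4)*a^2*x*c^2) c s H).
    unfold E, B, Ftp, Fdp. ring. }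
  assert (I2 : - D * Ftp a x y c s + A * Fdp a x y c s - 2*(2*a*a - 3*a*c + 1)*(y - (2*s - 2*a*c*s)) = 0).
  { apply (modrel _ ((2)*y + (-6)*a*y*c + (-6)*a^2*s + (4)*a^2*y + (4)*a^2*y*s^2 + (4)*a^2*y*c^2) c s H).
    unfold D, A, Ftp, Fdp. ring. }
  rewrite H1, H2 in I1, I2.
  split.
  - assert (2*(2*a*a - 3*a*c + 1)*(x - (2*c - a*(c*c-s*s))) = 0) as E1 by lra.
    apply Rmult_integral in E1. destruct E1; lra.
  - assert (2*(2*a*a - 3*a*c + 1)*(y - (2*s - 2*a*c*s)) = 0) as E1 by lra.
    apply Rmult_integral in E1. destruct E1; lra.
Qed.

Lemma F_on a c s : s^2 + c^2 = 1 ->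
  Ftp a (2*c - a*(c*c-s*s)) (2*s - 2*a*c*s) c s = 0 /\
  Fdp a (2*c - a*(c*c-s*s)) (2*s - 2*a*c*s) c s = 0.
Proof.
  intros H. split.
  - apply (modrel _ ((-4) + (6)*a*c + (-2)*a^2 + (-2)*a^2*s^2 + (-2)*a^2*c^2) c s H).
    unfold Ftp. ring.
  - apply (modrel _ ((-6)*a*s) c s H). unfold Fdp. ring.
Qed.

Lemma env_on a c s : s^2 + c^2 = 1 ->
  envelope_lhs a (2*c - a*(c*c-s*s), 2*s - 2*a*c*s) = 0%C.
Proof.
  intros H. unfold envelope_lhs. csimpl. apply injective_projections; simpl.
  - apply (modrel _ ((16)*s^2 + (16)*c^2 + (-16)*a*c + (-32)*a*c*s^2 + (-32)*a*c^3 + (4)*a^2 + (4)*a^2*s^2 + (8)*a^2*s^4 + (20)*a^2*c^2 + (32)*a^2*c^2*s^2 + (24)*a^2*c^4 + (-8)*a^3*c*s^2 + (-8)*a^3*c*s^4 + (-8)*a^3*c^3 + (-16)*a^3*c^3*s^2 + (-8)*a^3*c^5 + (-1)*a^4 + (-1)*a^4*s^2 + (1)*a^4*s^4 + (1)*a^4*s^6 + (-1)*a^4*c^2 + (2)*a^4*c^2*s^2 + (3)*a^4*c^2*s^4 + (1)*a^4*c^4 + (3)*a^4*c^4*s^2 + (1)*a^4*c^6) c s H).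
    ring.
  - ring.
Qed.

Lemma angle c s : s^2 + c^2 = 1 -> exists t, cos t = c /\ sin t = s.
Proof.
  intros H.
  assert (Hc : -1 <= c <= 1) by nra.
  assert (Hq : sqrt (1 - c²) = Rabs s).
  { rewrite <- sqrt_Rsqr_abs. f_equal. unfold Rsqr. nra. }
  destruct (Rle_or_lt 0 s) as [Hs|Hs].
  - exists (acos c). rewrite cos_acos, sin_acos by lra. rewrite Hq, Rabs_pos_eq; lra.
  - exists (- acos c). rewrite cos_neg, sin_neg, cos_acos, sin_acos by lra.
    rewrite Hq, Rabs_left; lra.
Qed.

Lemma back_param a x y : 1 < a ->
  (x*x+y*y)*(x*x+y*y) - 2*(a*a+2)*(x*x+y*y) + 8*a*x + a^4 - 4*a^2 = 0 ->
  exists c s, s^2 + c^2 = 1 /\ x = 2*c - a*(c*c-s*s) /\ y = 2*s - 2*a*c*s.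
Proof.
  intros Ha HQ.
  set (m := (x-a)^2 + y^2).
  destruct (Req_dec m 0) as [Hm|Hm].
  - assert (x = a /\ y = 0) as [-> ->].
    { assert (Hz : (x-a)² + y² = 0) by (unfold Rsqr; unfold m in Hm; lra).
      apply Rplus_sqr_eq_0 in Hz. lra. }
    set (r := sqrt (a^2 - 1)).
    assert (Hr : r * r = a^2 - 1) by (apply sqrt_sqrt; nra).
    exists (1/a), (r/a). repeat split.
    + replace ((r/a)^2 + (1/a)^2) with ((r*r + 1)/(a*a)) by (field; lra).
      rewrite Hr. field. lra.
    + replace (2 * (1 / a) - a * (1 / a * (1 / a) - r / a * (r / a))) with ((2 - 1 + r*r)/a) by (field; lra).
      rewrite Hr. field. lra.
    + field. lra.
  - assert (Hm0 : 0 <= m) by (unfold m; apply Rplus_le_le_0_compat; apply pow2_ge_0).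
    assert (Hmp : 0 < m) by (destruct Hm0 as [?|e]; [assumption| now elim Hm]).
    set (N := x*x + y*y - a*a).
    assert (HN : N*N = 4*m).
    { assert (N*N - 4*m = (x*x+y*y)*(x*x+y*y) - 2*(a*a+2)*(x*x+y*y) + 8*a*x + a^4 - 4*a^2)
        by (unfold N, m; ring). lra. }
    exists (N*(x-a)/(2*m)), (N*y/(2*m)).
    assert (E1 : (N*(x-a)/(2*m))*(N*(x-a)/(2*m)) - (N*y/(2*m))*(N*y/(2*m)) = ((x-a)^2 - y^2)/m).
    { replace ((N*(x-a)/(2*m))*(N*(x-a)/(2*m)) - (N*y/(2*m))*(N*y/(2*m)))
        with ((N*N)*((x-a)^2-y^2)/(4*m*m)) by (field; lra).
      rewrite HN. field. lra. }
    assert (E2 : 2*a*(N*(x-a)/(2*m))*(N*y/(2*m)) = 2*a*(x-a)*y/m).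
    { replace (2*a*(N*(x-a)/(2*m))*(N*y/(2*m))) with (a*(N*N)*(x-a)*y/(2*m*m)) by (field; lra).
      rewrite HN. field. lra. }
    repeat split.
    + replace ((N*y/(2*m))^2 + (N*(x-a)/(2*m))^2) with (N*N*((x-a)^2+y^2)/(4*m*m)) by (field; lra).
      change ((x-a)^2+y^2) with m. rewrite HN. field. lra.
    + rewrite E1. unfold N, m in *. field. lra.
    + rewrite E2. unfold N, m in *. field. lra.
Qed.

Lemma env_re a x y : Re (envelope_lhs a (x,y)) =
  (x*x+y*y)*(x*x+y*y) - 2*(a*a+2)*(x*x+y*y) + 8*a*x + a^4 - 4*a^2.
Proof. unfold envelope_lhs. csimpl. ring. Qed.

Theorem proposition4p3 (a : R) (ha : 1 < a) (z : C) :
  envelope (fun t z => directrix_lhs a (ucirc t) z) z <->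
  envelope_lhs a z = 0%C.
Proof.
  destruct z as [x y]. split.
  - intros [t [HG [Hre Him]]].
    assert (H1 : cos (2*t) * Ft a x y t = 0).
    { rewrite <- re_fun. rewrite HG. reflexivity. }
    assert (H2 : sin (2*t) * Ft a x y t = 0).
    { rewrite <- im_fun. rewrite HG. reflexivity. }
    assert (Hr := is_derive_unique _ _ _ Hre).
    rewrite (is_derive_unique _ _ _ (der_re a x y t)) in Hr.
    assert (Hi := is_derive_unique _ _ _ Him).
    rewrite (is_derive_unique _ _ _ (der_im a x y t)) in Hi.
    assert (H2t := sc (2*t)).
    assert (HF : Ft a x y t = 0).
    { assert (Ft a x y t = cos (2*t) * (cos (2*t) * Ft a x y t) + sin (2*t) * (sin (2*t) * Ft a x y t))
        as E by (rewrite <- (Rmult_1_l (Ft a x y t)) at 1; rewrite <- H2t; ring).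
      rewrite E, H1, H2. ring. }
    assert (HD : Fd a x y t = 0).
    { rewrite HF in Hr, Hi.
      assert (Fd a x y t = cos (2*t) * (-2 * sin (2*t) * 0 + cos (2*t) * Fd a x y t)
                         + sin (2*t) * (2 * cos (2*t) * 0 + sin (2*t) * Fd a x y t))
        as E by (rewrite <- (Rmult_1_l (Fd a x y t)) at 1; rewrite <- H2t; ring).
      rewrite E, Hr, Hi. ring. }
    rewrite Ft_p in HF. rewrite Fd_p in HD.
    destruct (solve_fwd a x y (cos t) (sin t) ha (sc t) HF HD) as [-> ->].
    apply env_on, sc.
  - intros H. assert (HQ : Re (envelope_lhs a (x,y)) = 0) by (rewrite H; reflexivity).
    rewrite env_re in HQ.
    destruct (back_param a x y ha HQ) as [c [s [Hcs [-> ->]]]].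
    destruct (angle c s Hcs) as [t [Hc Hs]].
    destruct (F_on a c s Hcs) as [F1 F2].
    rewrite <- Hc, <- Hs in F1, F2. rewrite <- Ft_p in F1. rewrite <- Fd_p in F2.
    exists t. split; [|split].
    + apply injective_projections.
      * change (Re (directrix_lhs a (ucirc t) (2 * c - a * (c * c - s * s), 2 * s - 2 * a * c * s)) = 0).
        rewrite re_fun, <- Hc, <- Hs, F1. ring.
      * change (Im (directrix_lhs a (ucirc t) (2 * c - a * (c * c - s * s), 2 * s - 2 * a * c * s)) = 0).
        rewrite im_fun, <- Hc, <- Hs, F1. ring.
    + pose proof (der_re a (2 * cos t - a * (cos t * cos t - sin t * sin t)) (2 * sin t - 2 * a * cos t * sin t) t) as D.
      rewrite F1, F2 in D. replace (-2 * sin (2 * t) * 0 + cos (2 * t) * 0) with 0 in D by ring.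
      rewrite Hc, Hs in D. exact D.
    + pose proof (der_im a (2 * cos t - a * (cos t * cos t - sin t * sin t)) (2 * sin t - 2 * a * cos t * sin t) t) as D.
      rewrite F1, F2 in D. replace (2 * cos (2 * t) * 0 + sin (2 * t) * 0) with 0 in D by ring.
      rewrite Hc, Hs in D. exact D.
Qed.
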